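(* Let $X_1,X_2,\ldots$ be i.i.d. with density $g(x;\Psi_0,\sigma_0)$, where $\Psi_0\in\boldsymbol{\Psi}_m$, $\sigma_0>0$, and assume $f(\cdot;0,1)$ satisfies Conditions C3 and C4. Let $a=(1+\beta)/(2\beta)$, $b=2(\beta+1)/(\beta-1)$ and $\epsilon_0=(3mbv_0/\sigma_0)^{-1/(1-a)}$. Then, with probability one, there exists $n_0$ such that for all $n\ge n_0$, $$\sup_{\mu\in\mathbb{R}}\sum_{i=1}^n I\big(|X_i-\mu|<\epsilon_0^{1-a}\big)\le \frac{n}{mb}.$$
   Context: Fix a positive integer $m$. Let $f(x;0,1)$ be a probability density on $\mathbb{R}$, $f(x;\mu,\sigma)=\sigma^{-1}f((x-\mu)/\sigma;0,1)$, $\boldsymbol{\Psi}_m=\{\sum_{j=1}^m\alpha_j I(\mu_j\le\mu):\alpha_j\ge0,\sum_j\alpha_j=1,\mu_j\in\mathbb{R}\}$, and $g(x;\Psi,\sigma)=\sum_{j=1}^m\alpha_j f(x;\mu_j,\sigma)$. (C3) There exist $v_0,v_1>0$ and $\beta>1$ such that $f(x;0,1)\le\min\{v_0,v_1|x|^{-\beta}\}$ for all $x$. (C4) $f(x;0,1)$ is continuous in $x$. The constants $v_0,\beta$ in the claim are those of C3; note $0<a<1$. *)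

(* Defs.v *)
From HB Require Import structures.
From mathcomp Require Import all_boot all_order all_algebra.
From mathcomp Require Import all_classical all_reals all_analysis.
Set Implicit Arguments. Unset Strict Implicit. Unset Printing Implicit Defensive.
Import Order.TTheory GRing.Theory Num.Theory.
Import numFieldNormedType.Exports.
Local Open Scope classical_set_scope.
Local Open Scope ring_scope.

Definition locscale {R : realType} (f : R -> R) (mu sigma x : R) : R :=
  sigma^-1 * f ((x - mu) / sigma).

(* finite location mixture g(x; Psi, sigma) = sum_j alpha_j f(x; mu_j, sigma),
   Psi = sum_j alpha_j I(mu_j <= .) given by weights alpha and atoms mu *)
Definition mixture_density {R : realType} (m : nat) (f : R -> R)
  (alpha mu : 'I_m -> R) (sigma x : R) : R :=
  \sum_(j < m) alpha j * locscale f (mu j) sigma x.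

Definition in_Psi_m {R : realType} (m : nat) (alpha : 'I_m -> R) : Prop :=
  (forall j, 0 <= alpha j) /\ \sum_(j < m) alpha j = 1.

Definition is_density {R : realType} (f : R -> R) : Prop :=
  measurable_fun [set: R] f /\ (forall x, 0 <= f x) /\
  (\int[@lebesgue_measure R]_x (f x)%:E = 1)%E.

(* Condition C3 with explicit constants v0, v1, beta:
   f x <= min{v0, v1 |x|^-beta}.  At x = 0, |x|^-beta = +oo, so the bound is v0;
   we split the min to avoid MathComp's convention 0 `^ (-beta) = 0. *)
Definition condC3 {R : realType} (f : R -> R) (v0 v1 beta : R) : Prop :=
  0 < v0 /\ 0 < v1 /\ 1 < beta /\
  forall x, f x <= v0 /\ (x != 0 -> f x <= v1 * `|x| `^ (- beta)).

Definition condC4 {R : realType} (f : R -> R) : Prop := continuous f.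

Definition has_density {d} {T : measurableType d} {R : realType}
  (P : probability T R) (X : T -> R) (g : R -> R) : Prop :=
  forall A : set R, measurable A ->
    (P (X @^-1` A) = \int[@lebesgue_measure R]_(x in A) (g x)%:E)%E.

Definition mutually_independent {d} {T : measurableType d} {R : realType}
  (P : probability T R) (X : nat -> T -> R) : Prop :=
  forall (s : seq nat) (A : nat -> set R),
    uniq s -> (forall i, measurable (A i)) ->
    P (\bigcap_(i in [set` s]) (X i @^-1` A i)) =
    (\prod_(i <- s) P (X i @^-1` A i))%E.

(* Main.v *)
Require Import Defs.
Set Warnings "-all".
From HB Require Import structures.
From mathcomp Require Import all_boot all_order all_algebra.
From mathcomp Require Import all_classical all_reals all_analysis.
From mathcomp Require Import ring lra.
Import Order.TTheory GRing.Theory Num.Theory.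
Import numFieldNormedType.Exports.
Local Open Scope classical_set_scope.
Local Open Scope ring_scope.
Set Implicit Arguments. Unset Strict Implicit.

Lemma geo_fin (R : realType) (r : R) : 0 <= r < 1 ->
  (\sum_(0 <= k <oo) (r ^+ k)%:E < +oo)%E.
Proof.
move=> /andP[r0 r1].
have hc : cvgn (series (geometric 1 r)).
  by apply: is_cvg_geometric_series; rewrite ger0_norm.
have -> : (fun n => \sum_(0 <= k < n) (r ^+ k)%:E)%E = EFin \o series (geometric 1 r).
  apply/funext => n /=; rewrite sumEFin /series /=; congr (_%:E).
  by apply: eq_bigr => k _; rewrite /geometric mul1r.
by rewrite EFin_lim // ltry.
Qed.

Lemma measure_bigU_le (d : measure_display) (T : measurableType d) (R : realType)
  (P : probability T R) (I : Type) (F : I -> set T) (s : seq I) (Q : pred I) :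
  (forall i, measurable (F i)) ->
  (P (\big[setU/set0]_(i <- s | Q i) F i) <= \sum_(i <- s | Q i) P (F i))%E.
Proof.
move=> mF; elim: s => [|a s IH]; first by rewrite !big_nil measure0.
rewrite !big_cons; case: (Q a) => //.
apply: le_trans (measureU2 _ _ _) _ => //; first exact: bigsetU_measurable.
exact: leeD2l.
Qed.
Definition patn (n : nat) (pt : {ffun 'I_n -> bool}) (i : nat) : bool :=
  if @insub _ (fun k => k < n)%N 'I_n i is Some j then pt j else false.

Lemma patn_ord n (pt : {ffun 'I_n -> bool}) (j : 'I_n) : patn pt j = pt j.
Proof.
rewrite /patn (insubT (fun k => k < n)%N (ltn_ord j)); congr (pt _); exact: val_inj.
Qed.

Definition Bset (R : realType) (A : set R) n (pt : {ffun 'I_n -> bool}) (i : nat) : set R :=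
  if patn pt i then A else ~` A.

Definition Ev (T : Type) (R : realType) (X : nat -> T -> R) (A : set R) n
  (pt : {ffun 'I_n -> bool}) : set T :=
  \bigcap_(i in [set` iota 0 n]) (X i @^-1` Bset A pt i).

Lemma Ev_meas (d : measure_display) (T : measurableType d) (R : realType)
  (X : nat -> T -> R) (A : set R) n (pt : {ffun 'I_n -> bool}) :
  (forall i B, measurable B -> measurable (X i @^-1` B)) -> measurable A ->
  measurable (Ev X A pt).
Proof.
move=> mX mA; apply: bigcap_measurableType => i _; apply: mX.
by rewrite /Bset; case: ifP => _ //; exact: measurableC.
Qed.

Lemma Ev_prob (d : measure_display) (T : measurableType d) (R : realType)
  (P : probability T R) (X : nat -> T -> R) (A : set R) (p : R) n (pt : {ffun 'I_n -> bool}) :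
  (forall i B, measurable B -> measurable (X i @^-1` B)) -> measurable A ->
  mutually_independent P X ->
  (forall i, P (X i @^-1` A) = p%:E) ->
  P (Ev X A pt) = (\prod_(i < n) (if pt i then p else 1 - p))%:E.
Proof.
move=> mX mA ind hp.
rewrite /Ev ind; last 2 first.
- exact: iota_uniq.
- by move=> i; rewrite /Bset; case: ifP => _ //; exact: measurableC.
rewrite -prodEFin.
have -> : iota 0 n = index_iota 0 n by rewrite /index_iota subn0.
rewrite big_mkord; apply: eq_bigr => i _.
rewrite /Bset patn_ord; case: (pt i); first exact: hp.
rewrite preimage_setC probability_setC ?hp //; by apply: mX.
Qed.
Definition npt (R : realType) n (pt : {ffun 'I_n -> bool}) : R := \sum_(j < n) (pt j)%:R.

Lemma binom_chernoff (R : realType) (n : nat) (p c s : R) :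
  0 <= p <= 1 -> 0 <= s ->
  \sum_(pt : {ffun 'I_n -> bool} | c * n%:R < npt R pt)
     \prod_(i < n) (if pt i then p else 1 - p)
  <= expR (- (s * c * n%:R)) * (1 - p + p * expR s) ^+ n.
Proof.
move=> /andP[p0 p1] s0.
have t0 : forall pt : {ffun 'I_n -> bool}, 0 <= \prod_(i < n) (if pt i then p else 1 - p).
  by move=> pt; apply: prodr_ge0 => i _; case: (pt i); lra.
apply: (@le_trans _ _ (\sum_(pt : {ffun 'I_n -> bool})
   expR (- (s * c * n%:R)) * \prod_(i < n) (if pt i then p * expR s else 1 - p))).
  rewrite [X in _ <= X](bigID (fun pt : {ffun 'I_n -> bool} => c * n%:R < npt R pt)) /=.
  rewrite -[X in X <= _]addr0; apply: lerD; last first.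
    apply: sumr_ge0 => pt _; apply: mulr_ge0; first exact: expR_ge0.
    by apply: prodr_ge0 => i _; case: (pt i); [apply: mulr_ge0 => //; exact: expR_ge0 | lra].
  apply: ler_sum => pt hpt.
  have -> : \prod_(i < n) (if pt i then p * expR s else 1 - p) =
     expR (s * npt R pt) * \prod_(i < n) (if pt i then p else 1 - p).
    rewrite /npt mulr_sumr (big_morph _ (@expRD R) (expR0 R)) -big_split /=.
    by apply: eq_bigr => i _; case: (pt i); rewrite ?mulr1 ?mulr0 ?expR0 ?mul1r // mulrC.
  rewrite mulrA -expRD -[X in X <= _]mul1r; apply: ler_wpM2r => //.
  apply: le_trans (expR_ge1Dx _); rewrite lerDl; move: hpt; nra.
rewrite -mulr_sumr; apply: ler_wpM2l; first exact: expR_ge0.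
rewrite -(bigA_distr_bigA (fun (i : 'I_n) (b : bool) => if b then p * expR s else 1 - p)) /=.
by rewrite prodr_const card_ord big_bool /= addrC.
Qed.

Lemma rho_bound (R : realType) (n : nat) (p c s : R) :
  0 <= p -> 0 <= s ->
  expR (- (s * c * n%:R)) * (1 - p + p * expR s) ^+ n
  <= expR (p * (expR s - 1) - s * c) ^+ n.
Proof.
move=> p0 s0.
have e1 : 1 <= expR s by apply: le_trans _ (expR_ge1Dx s); lra.
have h1 : (1 - p + p * expR s) ^+ n <= expR (p * (expR s - 1)) ^+ n.
  apply: lerXn2r; rewrite ?nnegrE; first by nra.
  - exact: expR_ge0.
  - by apply: le_trans (expR_ge1Dx _); lra.
have -> : expR (p * (expR s - 1) - s * c) ^+ n =
   expR (- (s * c * n%:R)) * expR (p * (expR s - 1)) ^+ n.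
  by rewrite -!expRM_natr -expRD mulrBl addrC.
by apply: ler_wpM2l; [exact: expR_ge0 | exact: h1].
Qed.

Lemma rho_lt1 (R : realType) (p c : R) : 0 <= p -> p < c ->
  exists s : R, 0 <= s /\ expR (p * (expR s - 1) - s * c) < 1.
Proof.
move=> p0 pc; have c0 : 0 < c by lra.
exists ((c - p) / (2 * c)).
set s := (c - p) / (2 * c).
have s0 : 0 < s by apply: divr_gt0; lra.
have s1 : s * (2 * c) = c - p by rewrite /s mulfVK //; apply/eqP => h; lra.
have hy : expR s * (1 - s) <= 1.
  have := expR_ge1Dx (- s); rewrite expRN => h.
  have ep : 0 < expR s by exact: expR_gt0.
  have h2 : 1 - s <= (expR s)^-1 by lra.
  by have := ler_wpM2l (ltW ep) h2; rewrite mulfV ?gt_eqF.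
split; first by lra.
rewrite expR_lt1.
have ep : 0 < expR s by exact: expR_gt0.
have cs : c * (1 - s) = (c + p) / 2 by nra.
have hs1 : 0 < 1 - s by nra.
have k1 : p * (expR s - 1) * (1 - s) <= p * s by nra.
have k2 : p * s < s * c * (1 - s) by nra.
have k3 : p * (expR s - 1) * (1 - s) < s * c * (1 - s) by lra.
rewrite ltr_pM2r // in k3; lra.
Qed.

Definition Fset (T : Type) (R : realType) (X : nat -> T -> R) (A : set R) (c : R) (n : nat) : set T :=
  \big[setU/set0]_(pt : {ffun 'I_n -> bool} | c * n%:R < npt R pt) Ev X A pt.

Lemma Fset_mem (T : Type) (R : realType) (X : nat -> T -> R) (A : set R) (c : R) (n : nat) w :
  c * n%:R < \sum_(i < n) (X i w \in A)%:R -> Fset X A c n w.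
Proof.
move=> h; set ptw := [ffun j : 'I_n => X j w \in A].
have hc : c * n%:R < npt R ptw.
  by rewrite /npt; under eq_bigr do rewrite ffunE.
rewrite /Fset (bigD1 ptw) //=; left.
move=> i; rewrite /= mem_iota add0n => /andP[_ hi].
rewrite /Bset.
have -> : patn ptw i = (X i w \in A).
  by rewrite /patn (insubT (fun k => k < n)%N hi) ffunE.
by case: ifP => [/set_mem|/negbT/negP hA] //; rewrite /setC /=; move=> /mem_set.
Qed.

Lemma key (d : measure_display) (T : measurableType d) (R : realType)
  (P : probability T R) (X : nat -> T -> R) (A : set R) (c : R) :
  (forall i B, measurable B -> measurable (X i @^-1` B)) -> measurable A ->
  mutually_independent P X ->
  (forall i, P (X i @^-1` A) = P (X 0%N @^-1` A)) ->
  fine (P (X 0%N @^-1` A)) < c ->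
  {ae P, forall w, \forall n \near \oo, \sum_(i < n) (X i w \in A)%:R <= c * n%:R}.
Proof.
move=> mX mA ind hid pc.
set p := fine (P (X 0%N @^-1` A)) in pc.
have m0 : measurable (X 0%N @^-1` A) by exact: mX.
have pE : P (X 0%N @^-1` A) = p%:E.
  rewrite /p fineK // ge0_fin_numE //.
  by apply: le_lt_trans (probability_le1 _ m0) _; rewrite ltry.
have hp : forall i, P (X i @^-1` A) = p%:E by move=> i; rewrite hid.
have p0 : 0 <= p by rewrite /p fine_ge0.
have p1 : p <= 1 by rewrite -lee_fin -pE probability_le1.
have [s [s0 hrho]] := rho_lt1 p0 pc.
set rho := expR (p * (expR s - 1) - s * c) in hrho.
have mF : forall n, measurable (Fset X A c n).
  by move=> n; apply: bigsetU_measurable => pt _; exact: Ev_meas.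
have PF : forall n, (P (Fset X A c n) <= (rho ^+ n)%:E)%E.
  move=> n; apply: le_trans (measure_bigU_le _ _ _ _) _.
    by move=> pt; exact: Ev_meas.
  under eq_bigr => pt _ do rewrite (Ev_prob pt mX mA ind hp).
  rewrite sumEFin lee_fin.
  apply: le_trans (binom_chernoff _ _ _ _) _; first by rewrite p0 p1.
    exact: s0.
  exact: rho_bound.
have fin : (\sum_(0 <= n <oo) P (Fset X A c n) < +oo)%E.
  apply: le_lt_trans (@geo_fin R rho _); last by apply/andP; split; [exact: expR_ge0 | exact: hrho].
  by apply: lee_nneseries => // n _ _; exact: measure_ge0.
have P0 := @lim_sup_set_cvg0 _ _ _ P _ mF fin.
exists (lim_sup_set (Fset X A c)); split => //.
  by apply: bigcap_measurable => // k _; exact: bigcup_measurable.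
move=> w /= nw; apply: contrapT => nl; apply: nw.
have [N hN] : exists N, forall j, (N <= j)%N -> ~ Fset X A c j w.
  apply: contrapT => hn; apply: nl => N _.
  apply: contrapT => hb; apply: hn; exists N => j hj Fj; apply: hb; exists j => //.
apply: filterS (nbhs_infty_ge N) => j hj.
rewrite leNgt; apply/negP => h; exact: (hN j hj (Fset_mem h)).
Qed.
Lemma mix_meas (R : realType) m (f : R -> R) (alpha mu : 'I_m -> R) (sigma : R) :
  continuous f ->
  measurable_fun setT (mixture_density f alpha mu sigma).
Proof.
move=> cf; apply: measurable_sum => j.
apply: measurable_realfun.continuous_measurable_fun => x.
rewrite /locscale.
apply: cvgMr; apply: cvgMr.
apply: continuous_comp; last exact: cf.
apply: cvgMl; apply: cvgB; [exact: cvg_id| exact: cvg_cst].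
Qed.

Lemma prob_itv_le (d : measure_display) (T : measurableType d) (R : realType)
  (P : probability T R) (Y : T -> R) (g : R -> R) (B x h : R) :
  has_density P Y g -> measurable_fun setT g -> (forall z, 0 <= g z <= B) ->
  0 <= h ->
  (P (Y @^-1` `](x - h)%R, (x + h)%R[) <= (B * (2 * h))%:E)%E.
Proof.
move=> hd mg gB h0.
rewrite hd //.
apply: (@le_trans _ _ (\int[lebesgue_measure]_(z in `](x - h)%R, (x + h)%R[) (cst B%:E) z)%E).
  apply: ge0_le_integral => //.
  - by move=> z _; rewrite lee_fin; case/andP: (gB z).
  - by apply/measurable_realfun.measurable_EFinP; exact: measurable_funS mg.
  - by move=> z _; rewrite lee_fin; case/andP: (gB z).
rewrite integral_cst //.
have := @lebesgue_measure_itv R `](x - h), (x + h)[%R. rewrite /=. move=> ->.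
have B0 : 0 <= B by case/andP: (gB 0) => ? ?; lra.
case: ifP => _; last by rewrite mule0 lee_fin; nra.
rewrite -EFinD -EFinM lee_fin; apply: ler_wpM2l => //; lra.
Qed.


Definition outs (R : realType) (M : R) : set R := [set x | M < `|x|].

Lemma outs_meas (R : realType) (M : R) : measurable (outs M).
Proof.
have := @measurable_realfun.normr_measurable R setT measurableT _ (measurable_itv `]M, +oo[%R).
rewrite setTI; congr measurable; apply/seteqP; split => x /=; rewrite in_itv /= andbT //.
Qed.

Lemma gbound (R : realType) m (f : R -> R) (alpha mu : 'I_m -> R) (sigma v0 : R) :
  (forall z, 0 <= f z <= v0) -> in_Psi_m alpha -> 0 < sigma ->
  forall x, 0 <= mixture_density f alpha mu sigma x <= v0 / sigma.
Proof.
move=> fb [a0 a1] s0 x; apply/andP; split.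
  apply: sumr_ge0 => j _; apply: mulr_ge0 => //; apply: mulr_ge0; first by rewrite invr_ge0 ltW.
  by case/andP: (fb ((x - mu j) / sigma)).
apply: (@le_trans _ _ (\sum_(j < m) alpha j * (sigma^-1 * v0))).
  apply: ler_sum => j _; apply: ler_wpM2l => //; apply: ler_wpM2l; first by rewrite invr_ge0 ltW.
  by case/andP: (fb ((x - mu j) / sigma)).
by rewrite -mulr_suml a1 mul1r mulrC.
Qed.

Lemma tail (d : measure_display) (T : measurableType d) (R : realType)
  (P : probability T R) (Y : T -> R) (c : R) :
  (forall B, measurable B -> measurable (Y @^-1` B)) -> 0 < c ->
  exists M : R, 0 <= M /\ fine (P (Y @^-1` outs M)) < c.
Proof.
move=> mY c0.
set F := fun k : nat => Y @^-1` outs k%:R.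
have mF : forall k, measurable (F k) by move=> k; apply: mY; exact: outs_meas.
have F0 : \bigcap_k F k = set0.
  apply/seteqP; split => // w /= hw.
  have := truncn_itv (normr_ge0 (Y w)); case/andP => _ h.
  have := hw (Num.Def.trunc `|Y w|).+1 I; rewrite /F /outs /=; lra.
have hc := @nonincreasing_cvg_mu _ _ _ P F _ mF _ _.
have : (P \o F) x @[x --> \oo] --> 0%:E.
  have := hc _ _ _.
  rewrite F0 measure0; apply.
  - by apply: le_lt_trans (probability_le1 _ (mF 0%N)) _; rewrite ltry.
  - by [].
  - move=> a b ab; apply/subsetPset => w; rewrite /F /outs /= => h; apply: le_lt_trans h; rewrite ler_nat.
    exact: ab.
case/fine_cvgP => _ hf.
have := @cvgr_lt _ _ _ _ _ 0 hf c c0; case=> N _ hN.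
exists N%:R; split => //.
exact: (hN N (leqnn N)).
Qed.

Lemma fine_lt_prob (d : measure_display) (T : measurableType d) (R : realType)
  (P : probability T R) (A : set T) (y c : R) :
  measurable A -> (P A <= y%:E)%E -> y < c -> fine (P A) < c.
Proof.
move=> mA h yc.
have fA : P A \is a fin_num.
  rewrite ge0_fin_numE //; apply: le_lt_trans (probability_le1 _ mA) _; exact: ltry.
rewrite -(fineK fA) lee_fin in h; lra.
Qed.

Lemma cnt_le (R : realType) (n : nat) (Xw : nat -> R) (mu r : R) (A : set R) :
  (forall x, `|x - mu| < r -> A x) ->
  (\sum_(i < n) (if `|Xw i - mu| < r then 1 else 0) : R) <= \sum_(i < n) (Xw i \in A)%:R.
Proof.
move=> hA; rewrite -subr_ge0 -sumrB; apply: sumr_ge0 => i _; rewrite subr_ge0; case hh : (`|Xw i - mu| < r); last by rewrite ler0n.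
by rewrite mem_set //; exact: hA.
Qed.

Unset Implicit Arguments.

Theorem lemma1 (R : realType) (d : measure_display) (T : measurableType d)
  (P : probability T R) (m : nat) (f : R -> R) (v0 v1 beta : R)
  (alpha0 mu0 : 'I_m -> R) (sigma0 : R) (X : nat -> {RV P >-> R}) :
  (0 < m)%N ->
  is_density f -> condC3 f v0 v1 beta -> condC4 f ->
  in_Psi_m alpha0 -> 0 < sigma0 ->
  mutually_independent P (fun i => X i : T -> R) ->
  (forall i, has_density P (X i) (mixture_density f alpha0 mu0 sigma0)) ->
  let a := (1 + beta) / (2 * beta) in
  let b := 2 * (beta + 1) / (beta - 1) in
  let eps0 := (3 * m%:R * b * v0 / sigma0) `^ (- (1 / (1 - a))) in
  {ae P, forall w, exists n0 : nat, forall n : nat, (n0 <= n)%N ->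
    forall mu : R,
      (\sum_(i < n) (if `|X i w - mu| < eps0 `^ (1 - a) then 1 else 0) : R) <= n%:R / (m%:R * b)}.
Proof.
move=> m0 [mf [f0 _]] [v0p [v1p [b1 fb]]] C4 psi s0 ind hd a b eps0.
have fbnd : forall z, 0 <= f z <= v0 by move=> z; rewrite f0; exact: (fb z).1.
set g := mixture_density f alpha0 mu0 sigma0 in hd.
have mg : measurable_fun setT g by exact: mix_meas.
have gb := gbound mu0 fbnd psi s0.
have mX : forall i B, measurable B -> measurable ((X i : T -> R) @^-1` B).
  by move=> i B mB; exact: measurable_funPTI.
have hsame : forall i A, measurable A ->
    P ((X i : T -> R) @^-1` A) = P ((X 0%N : T -> R) @^-1` A).
  by move=> i A mA; rewrite !hd.
have mpos : 0 < m%:R :> R by rewrite ltr0n.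
have bpos : 0 < b by rewrite /b; apply: divr_gt0; lra.
have mbpos : 0 < m%:R * b by exact: mulr_gt0.
set c := (m%:R * b)^-1.
have c0 : 0 < c by rewrite invr_gt0.
set K := 3 * m%:R * b * v0 / sigma0.
have K0 : 0 < K by rewrite /K; apply: divr_gt0 => //; apply: mulr_gt0 => //; nra.
have a1p : 0 < 1 - a.
  rewrite /a; have -> : 1 - (1 + beta) / (2 * beta) = (beta - 1) / (2 * beta).
    by field; apply/eqP; lra.
  by apply: divr_gt0; lra.
have a1 : 1 - a != 0 by rewrite gt_eqF.
set r := eps0 `^ (1 - a).
have rE : r = K^-1.
  by rewrite /r /eps0 -powRrM mulNr div1r mulVf // powR_inv1 // ltW.
have rpos : 0 < r by rewrite rE invr_gt0.
have rv : r * (v0 / sigma0) = c / 3.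
  by rewrite rE /K /c; field; rewrite !gt_eqF.
set del := r / 4.
have [M [M0 hM]] := tail P (mX 0%N) c0.
set L := M + r.
set K' := (Num.Def.trunc (2 * L / del)).+1.
pose t (k : nat) := - L + k%:R * del.
pose A (o : option 'I_K') : set R :=
  match o with None => outs M | Some k => `](t k - (r + del))%R, (t k + (r + del))%R[%classic end.
have mA : forall o, measurable (A o).
  by case=> [k|]; [exact: measurable_itv | exact: outs_meas].
have pA : forall o, fine (P ((X 0%N : T -> R) @^-1` A o)) < c.
  case=> [k|] /=; last exact: hM.
  apply: (@fine_lt_prob _ _ _ P _ (v0 / sigma0 * (2 * (r + del)))).
  - exact: mX.
  - have h0 : 0 <= r + del by rewrite /del; lra.
    exact: (@prob_itv_le _ _ _ P (X 0%N) g (v0 / sigma0) (t k) (r + del) (hd 0%N) mg gb h0).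
  - have -> : v0 / sigma0 * (2 * (r + del)) = 5 / 2 * (r * (v0 / sigma0)).
      by rewrite /del; field; rewrite gt_eqF.
    rewrite rv; lra.
have hk : forall o, {ae P, forall w, \forall n \near \oo,
    \sum_(i < n) ((X i : T -> R) w \in A o)%:R <= c * n%:R}.
  move=> o; apply: (@key _ _ _ P (fun i => X i : T -> R) (A o) c) => //.
  by move=> i; apply: hsame.
apply: filterS (filter_forall (ae_filter_ringOfSetsType P) hk) => w hw.
have := filter_forall _ hw; case=> N _ hN.
exists N => n hn mu.
have hn' := hN n hn.
have -> : n%:R / (m%:R * b) = c * n%:R by rewrite mulrC.
have dpos : 0 < del by rewrite /del; lra.
have [hmu|hmu] := leP `|mu| L; last first.
  apply: le_trans (@cnt_le R n (fun i => X i w) mu r (outs M) _) (hn' None).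
  move=> x hx; rewrite /outs /=.
  have h1 : `|mu| <= `|x| + `|mu - x|.
    by have := ler_normD x (mu - x); rewrite addrC subrK.
  rewrite distrC in h1; rewrite /L in hmu; lra.
have hm := ler_norml mu L; rewrite hmu in hm; move/esym/andP: hm => [hm1 hm2].
have q0 : 0 <= (mu + L) / del by apply: divr_ge0; [lra | exact: ltW].
have := truncn_itv q0; set k := Num.Def.trunc _; case/andP => hk1 hk2.
have e : (mu + L) / del * del = mu + L by rewrite divfK // gt_eqF.
have kd1 : k%:R * del <= mu + L by rewrite -e; apply: ler_wpM2r => //; exact: ltW.
have kd2 : mu + L < k.+1%:R * del by rewrite -e; rewrite ltr_pM2r.
have kK : (k < K')%N.
  rewrite /K' -(ltr_nat R).
  have h3 : (mu + L) / del <= 2 * L / del.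
    by rewrite ler_pM2r ?invr_gt0 //; lra.
  have L0 : 0 <= 2 * L / del by apply: divr_ge0; [rewrite /L; lra | exact: ltW].
  have := truncn_itv L0; case/andP => _ h4; lra.
apply: le_trans (@cnt_le R n (fun i => X i w) mu r (A (Some (Ordinal kK))) _) (hn' _).
move=> x hx; rewrite /A /= in_itv /=.
move: hx; rewrite ltr_distlC => /andP[h5 h6].
rewrite -addn1 natrD mulrDl mul1r in kd2.
rewrite /t /del in kd1 kd2 *; apply/andP; split; lra.
Qed.
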